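(* Let $a,\omega,\mu\in\mathbb{R}$ and, on the open set $\{y\neq0\}\subset T^*\mathbb{R}^2$ with coordinates ordered as $(p_x,p_y,x,y)$, consider \[H_{\mathrm{KK}}=\tfrac12(p_x^2+p_y^2)+8\omega x^2+\tfrac{\omega}{2}y^2+a\,xy^2+\tfrac{16a}{3}x^3+\tfrac{\mu}{2y^2},\] \[K_{\mathrm{KK}}=9\Bigl(\omega y^2+p_y^2+\tfrac{\mu}{y^2}\Bigr)^2+12a\,p_y y^2(3xp_y-yp_x)-2a^2y^4(6x^2+y^2)+12ax(\mu-\omega y^4)-18\omega\mu.\] Let $X$ be the vector field with components \[X^{p_x}=-4ax\,p_x-6ay\,p_y+\tfrac{48x(ax+\omega)}{y}p_y,\quad X^{p_y}=0,\quad X^x=-\tfrac12ay^2-\tfrac{3p_xp_y}{y}-3\omega x,\quad X^y=-\tfrac{6p_y^2}{y}+(8ax+3\omega)y,\] let $P_1=\mathcal L_XP_0$, i.e. (since $P_0$ is constant) $P_1=-(J_XP_0+P_0J_X^{\top})$ with $J_X$ the Jacobian matrix of $X$, and let $N=P_1P_0^{-1}$, $N^*=P_0^{-1}P_1$. Then: (i) $\{H_{\mathrm{KK}},K_{\mathrm{KK}}\}_0=0$; (ii) the Nijenhuis torsion of $N$ vanishes identically; (iii) with covectors written as column vectors of partial derivatives in the order $(p_x,p_y,x,y)$, \[N^*dH_{\mathrm{KK}}=M_{11}\,dH_{\mathrm{KK}}+M_{12}\,dK_{\mathrm{KK}},\qquad N^*dK_{\mathrm{KK}}=M_{21}\,dH_{\mathrm{KK}}+M_{22}\,dK_{\mathrm{KK}},\]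 where \[M_{11}=-2ax-\tfrac{3p_y^2}{y^2}+\tfrac{3\mu}{y^4},\quad M_{12}=-\tfrac{1}{12y^2},\quad M_{22}=-2ax-\tfrac{3p_y^2}{y^2}-\tfrac{3\mu}{y^4},\quad M_{21}=-\tfrac{12}{y^2}\bigl(K_{\mathrm{KK}}+6\mu M_{22}\bigr);\] (iv) the eigenvalues of the matrix $M=(M_{ab})$ are \[u_{1,2}=-2ax-\tfrac{3p_y^2}{y^2}\pm\tfrac{1}{y^2}\sqrt{K_{\mathrm{KK}}-12a\mu x-\tfrac{18\mu p_y^2}{y^2}-\tfrac{9\mu^2}{y^4}}.\]
   Context: $P_0$ is the canonical Poisson tensor on $T^*\mathbb{R}^2$, which in the ordering $(p_x,p_y,x,y)$ is the matrix $\begin{pmatrix}0&-I_2\\ I_2&0\end{pmatrix}$; the associated bracket is $\{f,g\}_0=f_xg_{p_x}-f_{p_x}g_x+f_yg_{p_y}-f_{p_y}g_y$. The Nijenhuis torsion of a $(1,1)$-tensor $N$ is $T_N(X,Y)=[NX,NY]-N([NX,Y]+[X,NY]-N[X,Y])$. *)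

(* Defs.v *)
From Stdlib Require Import Reals Lra Lia.
From Coquelicot Require Import Coquelicot.
Open Scope R_scope.

(* Points of T^*R^2 are functions nat -> R; only coordinates 0..3 matter,
   in the order (p_x, p_y, x, y) = (0, 1, 2, 3). *)
Definition pt := nat -> R.
Definition sum4 (f : nat -> R) : R := f 0%nat + f 1%nat + f 2%nat + f 3%nat.

Definition upd (p : pt) (j : nat) (t : R) : pt :=
  fun i => if Nat.eqb i j then t else p i.

Definition pd (f : pt -> R) (j : nat) (p : pt) : R :=
  Derive (fun t => f (upd p j t)) (p j).

Definition mat := nat -> nat -> R.
Definition mmul (A B : mat) : mat := fun i j => sum4 (fun k => A i k * B k j).
Definition mtr (A : mat) : mat := fun i j => A j i.
Definition mvec (A : mat) (v : nat -> R) : nat -> R := fun i => sum4 (fun j => A i j * v j).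
Definition idm : mat := fun i j => if Nat.eqb i j then 1 else 0.

Definition P0 : mat := fun i j =>
  match i, j with
  | 0%nat, 2%nat => -1 | 1%nat, 3%nat => -1 | 2%nat, 0%nat => 1 | 3%nat, 1%nat => 1 | _, _ => 0 end.
Definition P0inv : mat := fun i j =>
  match i, j with
  | 0%nat, 2%nat => 1 | 1%nat, 3%nat => 1 | 2%nat, 0%nat => -1 | 3%nat, 1%nat => -1 | _, _ => 0 end.

Lemma P0_P0inv : forall i j, (i < 4)%nat -> (j < 4)%nat ->
  mmul P0 P0inv i j = idm i j /\ mmul P0inv P0 i j = idm i j.
Proof.
  intros i j Hi Hj.
  unfold mmul, sum4, P0, P0inv, idm.
  do 4 (destruct i as [|i]; [ do 4 (destruct j as [|j]; [simpl; split; ring|]); exfalso; lia | ]).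
  exfalso; lia.
Qed.

Definition pb0 (f g : pt -> R) (p : pt) : R :=
  pd f 2 p * pd g 0 p - pd f 0 p * pd g 2 p + pd f 3 p * pd g 1 p - pd f 1 p * pd g 3 p.

Definition vf := pt -> nat -> R.

Definition jac (X : vf) (p : pt) : mat := fun i j => pd (fun q => X q i) j p.

Definition lie (X Y : vf) : vf := fun p i =>
  sum4 (fun j => X p j * pd (fun q => Y q i) j p - Y p j * pd (fun q => X q i) j p).

Definition tapp (N : pt -> mat) (X : vf) : vf := fun p => mvec (N p) (X p).
Definition vadd (X Y : vf) : vf := fun p i => X p i + Y p i.
Definition vsub (X Y : vf) : vf := fun p i => X p i - Y p i.

Definition torsion (N : pt -> mat) (X Y : vf) : vf :=
  vsub (lie (tapp N X) (tapp N Y))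
       (tapp N (vsub (vadd (lie (tapp N X) Y) (lie X (tapp N Y)))
                     (tapp N (lie X Y)))).

Definition lieP (X : vf) (p : pt) : mat := fun i j =>
  - (mmul (jac X p) P0 i j + mmul P0 (mtr (jac X p)) i j).

Section KK.
Variables a w mu : R.

Definition HKK (p : pt) : R :=
  let px := p 0%nat in let py := p 1%nat in let x := p 2%nat in let y := p 3%nat in
  / 2 * (px ^ 2 + py ^ 2) + 8 * w * x ^ 2 + w / 2 * y ^ 2 + a * x * y ^ 2
  + 16 * a / 3 * x ^ 3 + mu / (2 * y ^ 2).

Definition KKK (p : pt) : R :=
  let px := p 0%nat in let py := p 1%nat in let x := p 2%nat in let y := p 3%nat in
  9 * (w * y ^ 2 + py ^ 2 + mu / y ^ 2) ^ 2
  + 12 * a * py * y ^ 2 * (3 * x * py - y * px)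
  - 2 * a ^ 2 * y ^ 4 * (6 * x ^ 2 + y ^ 2)
  + 12 * a * x * (mu - w * y ^ 4) - 18 * w * mu.

Definition XKK : vf := fun p i =>
  let px := p 0%nat in let py := p 1%nat in let x := p 2%nat in let y := p 3%nat in
  match i with
  | 0%nat => - 4 * a * x * px - 6 * a * y * py + 48 * x * (a * x + w) / y * py
  | 1%nat => 0
  | 2%nat => - / 2 * a * y ^ 2 - 3 * px * py / y - 3 * w * x
  | 3%nat => - 6 * py ^ 2 / y + (8 * a * x + 3 * w) * y
  | _ => 0
  end.

Definition P1 (p : pt) : mat := lieP XKK p.
Definition NKK (p : pt) : mat := mmul (P1 p) P0inv.
Definition NstarKK (p : pt) : mat := mmul P0inv (P1 p).

Definition M11 (p : pt) : R :=
  - 2 * a * p 2%nat - 3 * p 1%nat ^ 2 / p 3%nat ^ 2 + 3 * mu / p 3%nat ^ 4.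
Definition M12 (p : pt) : R := - / (12 * p 3%nat ^ 2).
Definition M22 (p : pt) : R :=
  - 2 * a * p 2%nat - 3 * p 1%nat ^ 2 / p 3%nat ^ 2 - 3 * mu / p 3%nat ^ 4.
Definition M21 (p : pt) : R := - 12 / p 3%nat ^ 2 * (KKK p + 6 * mu * M22 p).

(* radicand and centre of the eigenvalues u_{1,2} *)
Definition ucen (p : pt) : R := - 2 * a * p 2%nat - 3 * p 1%nat ^ 2 / p 3%nat ^ 2.
Definition urad (p : pt) : R :=
  KKK p - 12 * a * mu * p 2%nat - 18 * mu * p 1%nat ^ 2 / p 3%nat ^ 2
  - 9 * mu ^ 2 / p 3%nat ^ 4.
End KK.

Definition is_eigenvalue2 (m11 m12 m21 m22 : R) (l : C) : Prop :=
  exists v1 v2 : C, (v1 <> 0%C \/ v2 <> 0%C) /\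
    (RtoC m11 * v1 + RtoC m12 * v2 = l * v1)%C /\
    (RtoC m21 * v1 + RtoC m22 * v2 = l * v2)%C.

Definition vf_diff (X : vf) : Prop :=
  forall (q : pt) (i j : nat), q 3%nat <> 0 -> (i < 4)%nat -> (j < 4)%nat ->
    ex_derive (fun t => X (upd q j t) i) (q j).

(* Main.v *)
Require Import Defs.
From Stdlib Require Import Reals Lra Lia FunctionalExtensionality.
From Coquelicot Require Import Coquelicot.
Open Scope R_scope.

Ltac nz := repeat split; repeat (match goal with
  | |- _ * _ <> 0 => apply Rmult_integral_contrapositive_currified
  | |- _ ^ _ <> 0 => apply pow_nonzero end); auto; try lra.

Lemma upd_same (p : pt) j : upd p j (p j) = p.
Proof.
  apply functional_extensionality; intro i; unfold upd.
  destruct (Nat.eqb_spec i j); subst; auto.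
Qed.

Lemma isd_mult (f g : R -> R) x df dg :
  is_derive f x df -> is_derive g x dg ->
  is_derive (fun t => f t * g t) x (df * g x + f x * dg).
Proof. intros H1 H2. apply (is_derive_mult f g x df dg H1 H2). intros; apply Rmult_comm. Qed.

Lemma isd_plus (f g : R -> R) x df dg :
  is_derive f x df -> is_derive g x dg ->
  is_derive (fun t => f t + g t) x (df + dg).
Proof. intros H1 H2. apply (is_derive_plus f g x df dg H1 H2). Qed.

Lemma pd_tapp (N : pt -> mat) (X : vf) p i j (dN : nat -> R) :
  (forall k, (k < 4)%nat -> is_derive (fun t => N (upd p j t) i k) (p j) (dN k)) ->
  (forall k, (k < 4)%nat -> ex_derive (fun t => X (upd p j t) k) (p j)) ->
  pd (fun q => tapp N X q i) j p =
  sum4 (fun k => dN k * X p k + N p i k * pd (fun q => X q k) j p).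
Proof.
  intros HN HX. unfold pd, tapp, mvec, sum4.
  apply is_derive_unique.
  assert (E : forall k, (k < 4)%nat -> is_derive (fun t => N (upd p j t) i k * X (upd p j t) k) (p j)
     (dN k * X p k + N p i k * Derive (fun t => X (upd p j t) k) (p j))).
  { intros k Hk. pose proof (isd_mult _ _ _ _ _ (HN k Hk) (Derive_correct _ _ (HX k Hk))) as H.
    cbv beta in H. rewrite upd_same in H. exact H. }
  apply isd_plus; [apply isd_plus; [apply isd_plus|]|]; apply E; lia.
Qed.

Definition TT (N : mat) (dN : nat -> nat -> nat -> R) i j k :=
  sum4 (fun l => N l j * dN i k l - N l k * dN i j l)
  - sum4 (fun m => N i m * (dN m k j - dN m j k)).

Lemma torsion_formula (N : pt -> mat) (X Y : vf) p (dN : nat -> nat -> nat -> R) i :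
  (i < 4)%nat ->
  (forall i k j, (i < 4)%nat -> (k < 4)%nat -> (j < 4)%nat ->
     is_derive (fun t => N (upd p j t) i k) (p j) (dN i k j)) ->
  (forall k j, (k < 4)%nat -> (j < 4)%nat -> ex_derive (fun t => X (upd p j t) k) (p j)) ->
  (forall k j, (k < 4)%nat -> (j < 4)%nat -> ex_derive (fun t => Y (upd p j t) k) (p j)) ->
  torsion N X Y p i =
  sum4 (fun j => sum4 (fun k => X p j * Y p k * TT (N p) dN i j k)).
Proof.
  intros Hi HN HX HY.
  assert (EX : forall i j, (i < 4)%nat -> (j < 4)%nat ->
     pd (fun q => tapp N X q i) j p =
     sum4 (fun k => dN i k j * X p k + N p i k * pd (fun q => X q k) j p)).
  { intros i' j' Hi' Hj'. apply (pd_tapp N X); intros k Hk; [apply HN|apply HX]; lia. }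
  assert (EY : forall i j, (i < 4)%nat -> (j < 4)%nat ->
     pd (fun q => tapp N Y q i) j p =
     sum4 (fun k => dN i k j * Y p k + N p i k * pd (fun q => Y q k) j p)).
  { intros i' j' Hi' Hj'. apply (pd_tapp N Y); intros k Hk; [apply HN|apply HY]; lia. }
  assert (TE : forall (V : vf) q k, tapp N V q k = sum4 (fun l => N q k l * V q l)) by reflexivity.
  unfold torsion, vsub, vadd, lie.
  rewrite !TE. cbv beta. unfold sum4. cbv beta.
  rewrite !TE. unfold sum4. cbv beta.
  rewrite !EX, !EY by lia. unfold TT, sum4.
  ring.
Qed.
Section S.
Variables a w : R.

Definition Jf (q : pt) (i j : nat) : R :=
  let P := q 0%nat in let Q := q 1%nat in let x := q 2%nat in let y := q 3%nat in
  match i, j with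
  | 0%nat, 0%nat => -4 * a * x
  | 0%nat, 1%nat => -6 * a * y + 48 * x * (a * x + w) / y
  | 0%nat, 2%nat => -4 * a * P + 48 * (2 * a * x + w) * Q / y
  | 0%nat, 3%nat => -6 * a * Q - 48 * x * (a * x + w) * Q / y ^ 2
  | 2%nat, 0%nat => -3 * Q / y
  | 2%nat, 1%nat => -3 * P / y
  | 2%nat, 2%nat => -3 * w
  | 2%nat, 3%nat => - a * y + 3 * P * Q / y ^ 2
  | 3%nat, 1%nat => -12 * Q / y
  | 3%nat, 2%nat => 8 * a * y
  | 3%nat, 3%nat => 6 * Q ^ 2 / y ^ 2 + 8 * a * x + 3 * w
  | _, _ => 0
  end.

Lemma jac_eq q i j : q 3%nat <> 0 -> (i < 4)%nat -> (j < 4)%nat -> jac (XKK a w) q i j = Jf q i j.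
Proof.
  intros Hq Hi Hj. unfold jac, pd, XKK, upd, Jf.
  do 4 (destruct i as [|i]; [ do 4 (destruct j as [|j]; [cbv beta iota; simpl Nat.eqb; cbv beta iota;
     apply is_derive_unique; auto_derive; [nz .. | field; nz] |]); exfalso; lia | ]).
  exfalso; lia.
Qed.

Definition Nf (q : pt) : mat := fun i k =>
  let P := q 0%nat in let Q := q 1%nat in let x := q 2%nat in let y := q 3%nat in
  match i, k with
  | 0%nat, 0%nat => 4 * a * x + 3 * w
  | 0%nat, 1%nat => -2 * a * y - 48 * x * (a * x + w) / y
  | 0%nat, 3%nat => 6 * a * Q + 48 * x * (a * x + w) * Q / y ^ 2
  | 1%nat, 0%nat => a * y - 3 * P * Q / y ^ 2
  | 1%nat, 1%nat => -6 * Q ^ 2 / y ^ 2 - 8 * a * x - 3 * w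
  | 1%nat, 2%nat => -(6 * a * Q + 48 * x * (a * x + w) * Q / y ^ 2)
  | 2%nat, 1%nat => 3 * P / y
  | 2%nat, 2%nat => 4 * a * x + 3 * w
  | 2%nat, 3%nat => a * y - 3 * P * Q / y ^ 2
  | 3%nat, 0%nat => -3 * P / y
  | 3%nat, 2%nat => -2 * a * y - 48 * x * (a * x + w) / y
  | 3%nat, 3%nat => -6 * Q ^ 2 / y ^ 2 - 8 * a * x - 3 * w
  | _, _ => 0
  end.

Definition d00 (q : pt) (j : nat) : R :=
  match j with 2%nat => 4 * a | _ => 0 end.
Definition d01 (q : pt) (j : nat) : R :=
  let x := q 2%nat in let y := q 3%nat in
  match j with 2%nat => -(96 * a * x + 48 * w) / y | 3%nat => -2 * a + 48 * x * (a * x + w) / y ^ 2 | _ => 0 end.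
Definition d03 (q : pt) (j : nat) : R :=
  let Q := q 1%nat in let x := q 2%nat in let y := q 3%nat in
  match j with 1%nat => 6 * a + 48 * x * (a * x + w) / y ^ 2
  | 2%nat => (96 * a * x + 48 * w) * Q / y ^ 2
  | 3%nat => -96 * x * (a * x + w) * Q / y ^ 3 | _ => 0 end.
Definition d10 (q : pt) (j : nat) : R :=
  let P := q 0%nat in let Q := q 1%nat in let y := q 3%nat in
  match j with 0%nat => -3 * Q / y ^ 2 | 1%nat => -3 * P / y ^ 2
  | 3%nat => a + 6 * P * Q / y ^ 3 | _ => 0 end.
Definition d11 (q : pt) (j : nat) : R :=
  let Q := q 1%nat in let y := q 3%nat in
  match j with 1%nat => -12 * Q / y ^ 2 | 2%nat => -8 * a | 3%nat => 12 * Q ^ 2 / y ^ 3 | _ => 0 end.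
Definition d21 (q : pt) (j : nat) : R :=
  let P := q 0%nat in let y := q 3%nat in
  match j with 0%nat => 3 / y | 3%nat => -3 * P / y ^ 2 | _ => 0 end.

Definition dNf (q : pt) (i k j : nat) : R :=
  match i, k with
  | 0%nat, 0%nat => d00 q j
  | 0%nat, 1%nat => d01 q j
  | 0%nat, 3%nat => d03 q j
  | 1%nat, 0%nat => d10 q j
  | 1%nat, 1%nat => d11 q j
  | 1%nat, 2%nat => - d03 q j
  | 2%nat, 1%nat => d21 q j
  | 2%nat, 2%nat => d00 q j
  | 2%nat, 3%nat => d10 q j
  | 3%nat, 0%nat => - d21 q j
  | 3%nat, 2%nat => d01 q j
  | 3%nat, 3%nat => d11 q j
  | _, _ => 0
  end.

Lemma NKK_eq q i k : q 3%nat <> 0 -> (i < 4)%nat -> (k < 4)%nat -> NKK a w q i k = Nf q i k.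
Proof.
  intros Hq Hi Hk. unfold NKK, P1, lieP, mmul, mtr, sum4.
  rewrite !jac_eq by (auto; lia).
  unfold Jf, Nf, P0, P0inv.
  do 4 (destruct i as [|i]; [ do 4 (destruct k as [|k]; [cbv beta iota; field; auto |]); exfalso; lia | ]).
  exfalso; lia.
Qed.

Lemma TT_zero p i j k : p 3%nat <> 0 -> (i < 4)%nat -> (j < 4)%nat -> (k < 4)%nat ->
  TT (Nf p) (dNf p) i j k = 0.
Proof.
  intros Hp Hi Hj Hk. unfold TT, sum4, Nf, dNf, d00, d01, d03, d10, d11, d21.
  do 4 (destruct i as [|i]; [ do 4 (destruct j as [|j]; [ do 4 (destruct k as [|k]; [cbv beta iota; field; auto |]); exfalso; lia |]); exfalso; lia | ]).
  exfalso; lia.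
Qed.

Lemma loc_nz (p : pt) j : p 3%nat <> 0 -> locally (p j) (fun t => upd p j t 3%nat <> 0).
Proof.
  intros Hp. assert (He : 0 < Rabs (p 3%nat)) by (apply Rabs_pos_lt; auto).
  exists (mkposreal _ He). intros t Hb. unfold upd.
  destruct (Nat.eqb_spec 3 j).
  - subst j. intro Ht. subst t. change (Rabs (0 - p 3%nat) < Rabs (p 3%nat)) in Hb.
    rewrite Rminus_0_l, Rabs_Ropp in Hb. lra.
  - auto.
Qed.

Lemma Nf_deriv p i k j : p 3%nat <> 0 -> (i < 4)%nat -> (k < 4)%nat -> (j < 4)%nat ->
  is_derive (fun t => Nf (upd p j t) i k) (p j) (dNf p i k j).
Proof.
  intros Hp Hi Hk Hj. unfold Nf, dNf, d00, d01, d03, d10, d11, d21, upd.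
  do 4 (destruct i as [|i]; [ do 4 (destruct k as [|k]; [ do 4 (destruct j as [|j]; [cbv beta iota; simpl Nat.eqb; cbv beta iota; auto_derive; [nz .. | field; nz] |]); exfalso; lia |]); exfalso; lia | ]).
  exfalso; lia.
Qed.

Lemma NKK_deriv p i k j : p 3%nat <> 0 -> (i < 4)%nat -> (k < 4)%nat -> (j < 4)%nat ->
  is_derive (fun t => NKK a w (upd p j t) i k) (p j) (dNf p i k j).
Proof.
  intros Hp Hi Hk Hj.
  apply is_derive_ext_loc with (f := fun t => Nf (upd p j t) i k).
  - generalize (loc_nz p j Hp). apply filter_imp. intros t Ht. symmetry. apply NKK_eq; auto.
  - apply Nf_deriv; auto.
Qed.
End S.

Section G.
Variables a w mu : R.

Definition gH (q : pt) (j : nat) : R :=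
  let P := q 0%nat in let Q := q 1%nat in let x := q 2%nat in let y := q 3%nat in
  match j with
  | 0%nat => P | 1%nat => Q | 2%nat => 16 * w * x + a * y ^ 2 + 16 * a * x ^ 2
  | _ => w * y + 2 * a * x * y - mu / y ^ 3 end.

Definition gK (q : pt) (j : nat) : R :=
  let P := q 0%nat in let Q := q 1%nat in let x := q 2%nat in let y := q 3%nat in
  let S := w * y ^ 2 + Q ^ 2 + mu / y ^ 2 in
  match j with
  | 0%nat => -12 * a * Q * y ^ 3
  | 1%nat => 36 * S * Q + 72 * a * x * Q * y ^ 2 - 12 * a * P * y ^ 3
  | 2%nat => 36 * a * Q ^ 2 * y ^ 2 - 24 * a ^ 2 * y ^ 4 * x + 12 * a * (mu - w * y ^ 4)
  | _ => 36 * S * (w * y - mu / y ^ 3) + 24 * a * Q * y * (3 * x * Q - y * P)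
         - 12 * a * Q * P * y ^ 2 - 2 * a ^ 2 * (24 * y ^ 3 * x ^ 2 + 6 * y ^ 5)
         - 48 * a * x * w * y ^ 3 end.

Lemma pdH q j : q 3%nat <> 0 -> (j < 4)%nat -> pd (HKK a w mu) j q = gH q j.
Proof.
  intros Hq Hj. unfold pd, HKK, upd, gH.
  do 4 (destruct j as [|j]; [cbv beta iota; simpl Nat.eqb; cbv beta iota;
     apply is_derive_unique; auto_derive; [nz .. | field; nz] |]).
  exfalso; lia.
Qed.

Lemma pdK q j : q 3%nat <> 0 -> (j < 4)%nat -> pd (KKK a w mu) j q = gK q j.
Proof.
  intros Hq Hj. unfold pd, KKK, upd, gK.
  do 4 (destruct j as [|j]; [cbv beta iota; simpl Nat.eqb; cbv beta iota;
     apply is_derive_unique; auto_derive; [nz .. | field; nz] |]).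
  exfalso; lia.
Qed.
End G.

Lemma TT_NKK a w p d i j k : p 3%nat <> 0 -> (i < 4)%nat -> (j < 4)%nat -> (k < 4)%nat ->
  TT (NKK a w p) d i j k = TT (Nf a w p) d i j k.
Proof.
  intros Hp Hi Hj Hk. unfold TT, sum4. rewrite !NKK_eq by (auto; lia). reflexivity.
Qed.

Lemma part_i a w mu p : p 3%nat <> 0 -> pb0 (HKK a w mu) (KKK a w mu) p = 0.
Proof.
  intros Hp. unfold pb0. rewrite !pdH, !pdK by (auto; lia).
  unfold gH, gK. field. nz.
Qed.

Lemma part_ii a w X Y : vf_diff X -> vf_diff Y ->
  forall (p : pt) (i : nat), p 3%nat <> 0 -> (i < 4)%nat -> torsion (NKK a w) X Y p i = 0.
Proof.
  intros HX HY p i Hp Hi.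
  rewrite (torsion_formula (NKK a w) X Y p (dNf a w p) i Hi).
  - unfold sum4. rewrite !TT_NKK by (auto; lia). rewrite !TT_zero by (auto; lia). ring.
  - intros; apply NKK_deriv; auto.
  - intros; apply HX; auto.
  - intros; apply HY; auto.
Qed.

Lemma part_iii a w mu p i : p 3%nat <> 0 -> (i < 4)%nat ->
     mvec (NstarKK a w p) (fun j => pd (HKK a w mu) j p) i
       = M11 a mu p * pd (HKK a w mu) i p + M12 p * pd (KKK a w mu) i p /\
     mvec (NstarKK a w p) (fun j => pd (KKK a w mu) j p) i
       = M21 a w mu p * pd (HKK a w mu) i p + M22 a mu p * pd (KKK a w mu) i p.
Proof.
  intros Hp Hi. unfold mvec, NstarKK, P1, lieP, mmul, mtr, sum4.
  rewrite !jac_eq by (auto; lia).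
  rewrite !pdH, !pdK by (auto; lia).
  unfold M11, M12, M21, M22, KKK, Jf, gH, gK, P0, P0inv.
  do 4 (destruct i as [|i]; [cbv beta iota; split; field; nz |]).
  exfalso; lia.
Qed.

Lemma Cintegral (x y : C) : (x * y = 0)%C -> x = 0 \/ y = 0.
Proof.
  intros H. destruct (Ceq_dec x 0) as [Hx|Hx]; [left; exact Hx|right].
  replace y with (/ x * (x * y))%C by (field; auto). rewrite H. ring.
Qed.

Lemma Csub0 (x y : C) : (x - y = 0)%C -> x = y.
Proof. intros H. replace x with ((x - y) + y)%C by ring. rewrite H. ring. Qed.

Lemma eig_abstract (m11 m12 m21 m22 c u y2 s l : C) :
  m12 <> 0 -> y2 <> 0 -> (m11 + m22 = c + c)%C ->
  ((m11 - c) * (m22 - c) - m12 * m21 = - u / (y2 * y2))%C -> (s * s = u)%C ->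
  ((exists v1 v2 : C, (v1 <> 0%C \/ v2 <> 0%C) /\
    (m11 * v1 + m12 * v2 = l * v1)%C /\ (m21 * v1 + m22 * v2 = l * v2)%C) <->
   (l = c + s / y2 \/ l = c - s / y2)%C).
Proof.
  intros H12 Hy Htr Hdet Hs.
  assert (HD : ((m11 - l) * (m22 - l) - m12 * m21 = (l - c - s / y2) * (l - c + s / y2))%C).
  { transitivity ((l - c) * (l - c) - (m11 + m22 - (c + c)) * (l - c)
        + ((m11 - c) * (m22 - c) - m12 * m21))%C; [ring|].
    rewrite Htr, Hdet, <- Hs. field. auto. }
  split.
  - intros [v1 [v2 [Hv [E1 E2]]]].
    assert (D0 : ((m11 - l) * (m22 - l) - m12 * m21 = 0)%C).
    { destruct Hv as [Hv|Hv].
      + destruct (Cintegral ((m11 - l) * (m22 - l) - m12 * m21) v1) as [?|?]; auto; [|contradiction].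
        transitivity ((m22 - l) * (m11 * v1 + m12 * v2 - l * v1) - m12 * (m21 * v1 + m22 * v2 - l * v2))%C;
          [ring|]. rewrite E1, E2. ring.
      + destruct (Cintegral ((m11 - l) * (m22 - l) - m12 * m21) v2) as [?|?]; auto; [|contradiction].
        transitivity ((m11 - l) * (m21 * v1 + m22 * v2 - l * v2) - m21 * (m11 * v1 + m12 * v2 - l * v1))%C;
          [ring|]. rewrite E1, E2. ring. }
    rewrite HD in D0. destruct (Cintegral _ _ D0) as [F|F].
    + left. apply Csub0. rewrite <- F. ring.
    + right. apply Csub0. rewrite <- F. ring.
  - intros HL. exists m12, (l - m11)%C. split; [left; auto|]. split; [ring|].
    apply Csub0.
    transitivity (- ((m11 - l) * (m22 - l) - m12 * m21))%C; [ring|].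
    rewrite HD. destruct HL as [HL|HL]; rewrite HL; ring.
Qed.

Lemma part_iv a w mu p s : p 3%nat <> 0 -> (s * s = RtoC (urad a w mu p))%C ->
     forall l : C,
       is_eigenvalue2 (M11 a mu p) (M12 p) (M21 a w mu p) (M22 a mu p) l <->
       (l = RtoC (ucen a p) + s / RtoC (p 3%nat ^ 2) \/
        l = RtoC (ucen a p) - s / RtoC (p 3%nat ^ 2))%C.
Proof.
  intros Hp Hs l. unfold is_eigenvalue2.
  assert (Hy2 : p 3%nat ^ 2 <> 0) by nz.
  apply eig_abstract with (u := RtoC (urad a w mu p)); auto.
  - intro H. apply RtoC_inj in H. unfold M12 in H.
    assert (H' : / (12 * p 3%nat ^ 2) <> 0) by (apply Rinv_neq_0_compat; nz).
    apply H'. lra.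
  - intro H. apply RtoC_inj in H. auto.
  - rewrite <- !RtoC_plus. f_equal. unfold M11, M22, ucen. field. nz.
  - assert (E : RtoC ((M11 a mu p - ucen a p) * (M22 a mu p - ucen a p) - M12 p * M21 a w mu p)
              = RtoC (- urad a w mu p / (p 3%nat ^ 2 * p 3%nat ^ 2))).
    { f_equal. unfold M11, M12, M21, M22, ucen, urad. field. nz. }
    rewrite RtoC_minus, !RtoC_mult, !RtoC_minus, RtoC_div, RtoC_opp, RtoC_mult in E by nz.
    exact E.
Qed.

Theorem mainTheorem2 (a w mu : R) :
  (* (i) *)
  (forall p : pt, p 3%nat <> 0 -> pb0 (HKK a w mu) (KKK a w mu) p = 0) /\
  (* (ii) Nijenhuis torsion of N vanishes on {y <> 0} *)
  (forall X Y : vf, vf_diff X -> vf_diff Y ->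
     forall (p : pt) (i : nat), p 3%nat <> 0 -> (i < 4)%nat ->
       torsion (NKK a w) X Y p i = 0) /\
  (* (iii) *)
  (forall (p : pt) (i : nat), p 3%nat <> 0 -> (i < 4)%nat ->
     mvec (NstarKK a w p) (fun j => pd (HKK a w mu) j p) i
       = M11 a mu p * pd (HKK a w mu) i p + M12 p * pd (KKK a w mu) i p /\
     mvec (NstarKK a w p) (fun j => pd (KKK a w mu) j p) i
       = M21 a w mu p * pd (HKK a w mu) i p + M22 a mu p * pd (KKK a w mu) i p) /\
  (* (iv) eigenvalues u_{1,2} = ucen +- sqrt(urad)/y^2, for either complex root s *)
  (forall (p : pt) (s : C), p 3%nat <> 0 -> (s * s = RtoC (urad a w mu p))%C ->
     forall l : C,
       is_eigenvalue2 (M11 a mu p) (M12 p) (M21 a w mu p) (M22 a mu p) l <->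
       (l = RtoC (ucen a p) + s / RtoC (p 3%nat ^ 2) \/
        l = RtoC (ucen a p) - s / RtoC (p 3%nat ^ 2))%C).
Proof.
  split; [|split; [|split]].
  - intros p Hp. apply part_i; auto.
  - intros X Y HX HY. apply part_ii; auto.
  - intros p i Hp Hi. apply part_iii; auto.
  - intros p s Hp Hs. apply part_iv; auto.
Qed.
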